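(* Let $(\mathcal M,\mathrm d_{\mathcal M})$ be a metric space with finite doubling constant $\lambda$ and doubling dimension $d_{\mathcal M}=\log_2\lambda$. There is a constant $c>0$ depending only on $\lambda$ such that the following holds. Let $\alpha\ge2$, $\epsilon\in(0,1)$, $k,m\ge 1$, $X\in\mathcal M^m$, let $X_k\in\mathcal M^k$ be an $\alpha$-approximate $k$-simplification of $X$, and write $D=\mathrm d_{dF}(X,X_k)$. Then there is a finite set $\mathcal C\subset\mathcal M^k$ with $|\mathcal C|\le\big(c\,k\,\log_2(\alpha/\epsilon)(\alpha/\epsilon)^{d_{\mathcal M}}\big)^k$ such that the following holds for every $q\in\mathcal M^k$. Define $X^*=X_k$ if $\mathrm d_{dF}(q,X_k)\le\frac{\epsilon}{2\alpha}D$ or $\mathrm d_{dF}(q,X_k)\ge\frac{2(\alpha+1)}{\epsilon}D$, and otherwise let $X^*$ be any element of $\mathcal C$ minimizing $\mathrm d_{dF}(q,\cdot)$ over $\mathcal C$. Then $\Delta:=\mathrm d_{dF}(q,X^* )+\mathrm d_{dF}(X^*,X)$ satisfies \[ \mathrm d_{dF}(q,X)\le\Delta\le(1+\epsilon)\,\mathrm d_{dF}(q,X). \]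
   Context: A curve of complexity $m$ in a metric space $(\mathcal M,\mathrm d_{\mathcal M})$ is a sequence $p=p_1,\dots,p_m$ of points of $\mathcal M$; $\mathcal M^m$ denotes the set of such curves. For $p\in\mathcal M^m$ and $q\in\mathcal M^k$, a traversal of $p$ and $q$ is a sequence of index pairs $(i_1,j_1),\dots,(i_t,j_t)$ with $(i_1,j_1)=(1,1)$, $(i_t,j_t)=(m,k)$, and for every $u<t$: $i_{u+1}-i_u\in\{0,1\}$, $j_{u+1}-j_u\in\{0,1\}$ and $(i_{u+1}-i_u)+(j_{u+1}-j_u)\ge 1$. Its cost is $\max_u \mathrm d_{\mathcal M}(p_{i_u},q_{j_u})$. The discrete Fréchet distance $\mathrm d_{dF}(p,q)$ is the minimum cost over all traversals of $p$ and $q$. For $p\in\mathcal M^m$ and $\alpha\ge 1$, a curve $p'\in\mathcal M^k$ is an $\alpha$-approximate $k$-simplification of $p$ if $\mathrm d_{dF}(p,p')\le\alpha\,\mathrm d_{dF}(p,q)$ for every $q\in\mathcal M^k$. The doubling constant $\lambda$ of $\mathcal M$ is the smallest integer such that every closed ball of radius $r>0$ can be covered by at most $\lambda$ closed balls of radius $r/2$ centered at points of $\mathcal M$. *)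

(* Defs.v *)
From Stdlib Require Import Reals Lra List ClassicalEpsilon.
Import ListNotations.
Open Scope R_scope.

Definition is_metric {M : Type} (d : M -> M -> R) : Prop :=
  (forall x y, 0 <= d x y) /\
  (forall x y, d x y = 0 <-> x = y) /\
  (forall x y, d x y = d y x) /\
  (forall x y z, d x z <= d x y + d y z).

Definition doubling_cover {M : Type} (d : M -> M -> R) (n : nat) : Prop :=
  forall (x : M) (r : R), 0 < r ->
    exists centers : list M, (length centers <= n)%nat /\
      forall y, d x y <= r -> exists c, In c centers /\ d c y <= r / 2.

Definition doubling_constant {M : Type} (d : M -> M -> R) (lam : nat) : Prop :=
  doubling_cover d lam /\ forall n, doubling_cover d n -> (lam <= n)%nat.

Definition log2 (x : R) : R := ln x / ln 2.

(** Curves are lists of points; a curve of complexity m has length m.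
    Indices are 0-based: p_1..p_m of the paper are positions 0..m-1. *)

Definition valid_step (a b : nat * nat) : Prop :=
  let '(i, j) := a in let '(i', j') := b in
  (i' = i \/ i' = S i) /\ (j' = j \/ j' = S j) /\ (i' + j' >= S (i + j))%nat.

Fixpoint steps_ok (t : list (nat * nat)) : Prop :=
  match t with
  | a :: ((b :: _) as t') => valid_step a b /\ steps_ok t'
  | _ => True
  end.

Definition traversal {M : Type} (p q : list M) (t : list (nat * nat)) : Prop :=
  hd_error t = Some (0%nat, 0%nat) /\
  last t (0%nat, 0%nat) = (pred (length p), pred (length q)) /\
  t <> [] /\ steps_ok t.

Definition pair_dist {M : Type} (d : M -> M -> R) (p q : list M) (ij : nat * nat) : R :=
  match nth_error p (fst ij), nth_error q (snd ij) with
  | Some a, Some b => d a b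
  | _, _ => 0
  end.

Definition trav_cost {M : Type} (d : M -> M -> R) (p q : list M) (t : list (nat * nat)) : R :=
  fold_right Rmax 0 (map (pair_dist d p q) t).

Definition is_dF {M : Type} (d : M -> M -> R) (p q : list M) (r : R) : Prop :=
  (exists t, traversal p q t /\ trav_cost d p q t = r) /\
  (forall t, traversal p q t -> r <= trav_cost d p q t).

(** Discrete Fréchet distance: the minimum cost over all traversals
    (chosen via classical epsilon; it exists for nonempty curves). *)
Definition dF {M : Type} (d : M -> M -> R) (p q : list M) : R :=
  epsilon (inhabits 0) (is_dF d p q).

Definition approx_simplification {M : Type} (d : M -> M -> R)
    (alpha : R) (k : nat) (p p' : list M) : Prop :=
  length p' = k /\
  forall q : list M, length q = k -> dF d p p' <= alpha * dF d p q.

(* Main.v *)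
Require Import Defs.
From Stdlib Require Import Reals Lra Lia List ClassicalEpsilon Classical.
Import ListNotations.
Open Scope R_scope.

Inductive FR {M : Type} (d : M -> M -> R) (e : R) : list M -> list M -> Prop :=
| FR_one : forall a b, d a b <= e -> FR d e [a] [b]
| FR_l : forall a b p q, d a b <= e -> FR d e p (b :: q) -> FR d e (a :: p) (b :: q)
| FR_r : forall a b p q, d a b <= e -> FR d e (a :: p) q -> FR d e (a :: p) (b :: q)
| FR_lr : forall a b p q, d a b <= e -> FR d e p q -> FR d e (a :: p) (b :: q).

Lemma FR_nonempty {M} (d : M -> M -> R) e p q : FR d e p q -> p <> [] /\ q <> [].
Proof. intros H; destruct H; split; discriminate. Qed.

Lemma FR_mono {M} (d : M -> M -> R) e e' p q : FR d e p q -> e <= e' -> FR d e' p q.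
Proof.
  intros H Hle; induction H.
  - apply FR_one; lra.
  - apply FR_l; auto; lra.
  - apply FR_r; auto; lra.
  - apply FR_lr; auto; lra.
Qed.

Lemma FR_head {M} (d : M -> M -> R) e a b p q : FR d e (a :: p) (b :: q) -> d a b <= e.
Proof. intros H; inversion H; subst; auto. Qed.

Lemma FR_sym {M} (d : M -> M -> R) e p q :
  (forall x y, d x y = d y x) -> FR d e p q -> FR d e q p.
Proof.
  intros Hs H; induction H.
  - apply FR_one; rewrite Hs; auto.
  - apply FR_r; auto; rewrite Hs; auto.
  - apply FR_l; auto; rewrite Hs; auto.
  - apply FR_lr; auto; rewrite Hs; auto.
Qed.

Lemma FR_nonneg {M} (d : M -> M -> R) e p q :
  (forall x y, 0 <= d x y) -> FR d e p q -> 0 <= e.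
Proof. intros Hp H; destruct H; specialize (Hp a b); lra. Qed.

Lemma FR_elem {M} (d : M -> M -> R) e p q :
  FR d e p q -> forall a, In a p -> exists b, In b q /\ d a b <= e.
Proof.
  intros H; induction H; intros x Hx.
  - destruct Hx as [<-|[]]. exists b; simpl; auto.
  - destruct Hx as [<-|Hx]. exists b; simpl; auto. apply IHFR; auto.
  - destruct (IHFR x Hx) as [c [Hc Hd]]. exists c; simpl; auto.
  - destruct Hx as [<-|Hx]. exists b; simpl; auto.
    destruct (IHFR x Hx) as [c [Hc Hd]]. exists c; simpl; auto.
Qed.

Lemma FR_tri {M} (d : M -> M -> R) e1 e2 :
  (forall x y z, d x z <= d x y + d y z) ->
  forall n p q r, (length p + length q + length r <= n)%nat ->
  FR d e1 p q -> FR d e2 q r -> FR d (e1 + e2) p r.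
Proof.
  intros Ht n; induction n as [|n IH]; intros p q r Hn H1 H2.
  { destruct H1; simpl in Hn; lia. }
  destruct H1 as [a b Hab|a b p q Hab H1|a b p q Hab H1|a b p q Hab H1].
  - inversion H2 as [b' c Hbc|b' c p' r' Hbc H2'|b' c p' r' Hbc H2'|b' c p' r' Hbc H2']; subst.
    + apply FR_one. specialize (Ht a b c); lra.
    + destruct (FR_nonempty _ _ _ _ H2'); congruence.
    + apply FR_r. specialize (Ht a b c); lra.
      apply (IH [a] [b] r'); auto. simpl in *; lia. apply FR_one; auto.
    + destruct (FR_nonempty _ _ _ _ H2'); congruence.
  -
    destruct r as [|c r']. { destruct (FR_nonempty _ _ _ _ H2); congruence. }
    assert (Hbc := FR_head _ _ _ _ _ _ H2).
    apply FR_l. specialize (Ht a b c); lra.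
    apply (IH p (b :: q) (c :: r')); auto. simpl in *; lia.
  -
    inversion H2 as [b' c Hbc|b' c p' r' Hbc H2'|b' c p' r' Hbc H2'|b' c p' r' Hbc H2']; subst.
    + destruct (FR_nonempty _ _ _ _ H1); congruence.
    + apply (IH (a :: p) q (c :: r')); auto. simpl in *; lia.
    + apply FR_r. specialize (Ht a b c); lra.
      apply (IH (a :: p) (b :: q) r'); auto. simpl in *; lia. apply FR_r; auto.
    + assert (FR d (e1 + e2) (a :: p) r') by (apply (IH (a :: p) q r'); auto; simpl in *; lia).
      apply FR_r; auto. specialize (Ht a b c); lra.
  -
    inversion H2 as [b' c Hbc|b' c p' r' Hbc H2'|b' c p' r' Hbc H2'|b' c p' r' Hbc H2']; subst.
    + destruct (FR_nonempty _ _ _ _ H1); congruence.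
    + apply FR_l. specialize (Ht a b c); lra.
      apply (IH p q (c :: r')); auto. simpl in *; lia.
    + apply FR_r. specialize (Ht a b c); lra.
      apply (IH (a :: p) (b :: q) r'); auto. simpl in *; lia. apply FR_lr; auto.
    + apply FR_lr. specialize (Ht a b c); lra.
      apply (IH p q r'); auto. simpl in *; lia.
Qed.
Lemma last_ne {A} (l : list A) d1 d2 : l <> [] -> last l d1 = last l d2.
Proof.
  induction l as [|x l IH]; intros H; [congruence|].
  destruct l; [reflexivity|]. simpl. apply IH; discriminate.
Qed.

Lemma last_cons_ne {A} (x : A) l dd : l <> [] -> last (x :: l) dd = last l dd.
Proof. destruct l; [congruence|reflexivity]. Qed.

Lemma last_map_ne {A B} (f : A -> B) l d d' : l <> [] -> last (map f l) d = f (last l d').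
Proof.
  induction l as [|x l IH]; intros H; [congruence|].
  destruct l as [|y l]; [reflexivity|].
  change (last (f x :: map f (y :: l)) d = f (last (x :: y :: l) d')).
  rewrite last_cons_ne by discriminate. rewrite IH by discriminate. reflexivity.
Qed.

Lemma last_in {A} (l : list A) dd : l <> [] -> In (last l dd) l.
Proof.
  induction l as [|x l IH]; intros H; [congruence|].
  destruct l as [|y l]; [simpl; auto|].
  rewrite last_cons_ne by discriminate. right; apply IH; discriminate.
Qed.

Lemma steps_ok_tail (a : nat * nat) t : steps_ok (a :: t) -> steps_ok t.
Proof. destruct t; simpl; tauto. Qed.

Lemma steps_ok_mono : forall t (h : nat * nat), steps_ok (h :: t) ->
  forall z, In z t -> (fst h <= fst z /\ snd h <= snd z)%nat.
Proof.
  induction t as [|b t IH]; intros h Hs z Hz; [destruct Hz|].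
  destruct Hs as [Hv Hs]. destruct h as [i j], b as [i' j'].
  destruct Hv as [H1 [H2 H3]].
  destruct Hz as [<-|Hz]; simpl; [lia|].
  specialize (IH _ Hs z Hz). simpl in IH. lia.
Qed.

Definition shd (di dj : nat) (z : nat * nat) : nat * nat := (fst z - di, snd z - dj)%nat.
Definition sup (di dj : nat) (z : nat * nat) : nat * nat := (di + fst z, dj + snd z)%nat.

Lemma steps_ok_shd di dj : forall t, steps_ok t ->
  (forall z, In z t -> di <= fst z /\ dj <= snd z)%nat -> steps_ok (map (shd di dj) t).
Proof.
  induction t as [|a t IH]; intros Hs Hz; [simpl; auto|].
  destruct t as [|b t]; [simpl; auto|].
  destruct Hs as [Hv Hs]. split.
  - destruct a as [i j], b as [i' j']. unfold shd; simpl in *.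
    pose proof (Hz (i, j) (or_introl eq_refl)). pose proof (Hz (i', j') (or_intror (or_introl eq_refl))).
    simpl in *. lia.
  - apply IH; auto. intros z H; apply Hz; right; auto.
Qed.

Lemma steps_ok_sup di dj : forall t, steps_ok t -> steps_ok (map (sup di dj) t).
Proof.
  induction t as [|a t IH]; intros Hs; [simpl; auto|].
  destruct t as [|b t]; [simpl; auto|].
  destruct Hs as [Hv Hs]. split.
  - destruct a as [i j], b as [i' j']. unfold sup; simpl in *. lia.
  - apply IH; auto.
Qed.

Lemma pair_dist_skip {M} (d : M -> M -> R) P Q di dj z :
  pair_dist d (skipn di P) (skipn dj Q) z = pair_dist d P Q (sup di dj z).
Proof. unfold pair_dist, sup; simpl. rewrite !nth_error_skipn. reflexivity. Qed.

Lemma cost_cons {M} (d : M -> M -> R) p q z t :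
  trav_cost d p q (z :: t) = Rmax (pair_dist d p q z) (trav_cost d p q t).
Proof. reflexivity. Qed.

Lemma cost_ge {M} (d : M -> M -> R) p q t z : In z t -> pair_dist d p q z <= trav_cost d p q t.
Proof.
  induction t as [|a t IH]; intros H; [destruct H|]. rewrite cost_cons.
  destruct H as [<-|H]. apply Rmax_l. eapply Rle_trans; [apply IH; auto| apply Rmax_r].
Qed.

Lemma cost_ext {M} (d : M -> M -> R) p q p' q' t t' :
  map (pair_dist d p q) t = map (pair_dist d p' q') t' -> trav_cost d p q t = trav_cost d p' q' t'.
Proof. unfold trav_cost; intros ->; reflexivity. Qed.

Lemma trav_to_FR {M} (d : M -> M -> R) : forall N t p q, (length t <= N)%nat ->
  p <> [] -> q <> [] -> traversal p q t -> FR d (trav_cost d p q t) p q.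
Proof.
  induction N as [|N IH]; intros t p q Hl Hp Hq [Hh [Hla [Hne Hs]]].
  { destruct t; simpl in Hl; [congruence|lia]. }
  destruct t as [|z0 t']; [congruence|]. simpl in Hh. injection Hh as ->.
  destruct p as [|a p']; [congruence|]. destruct q as [|b q']; [congruence|].
  rewrite cost_cons.
  assert (Hab : d a b <= Rmax (pair_dist d (a :: p') (b :: q') (0, 0)%nat) (trav_cost d (a :: p') (b :: q') t'))
    by (apply Rmax_l).
  destruct t' as [|z t''].
  - simpl in Hla. injection Hla as E1 E2. destruct p'; [|simpl in E1; lia].
    destruct q'; [|simpl in E2; lia]. apply FR_one; auto.
  - set (t' := z :: t'') in *.
    assert (Hmono : forall w, In w t' -> (fst z <= fst w /\ snd z <= snd w)%nat).
    { intros w [<-|Hw]; [lia|]. apply (steps_ok_mono t'' z); auto. apply Hs. }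
    assert (Hv : valid_step (0, 0)%nat z) by apply Hs.
    destruct z as [i j]. destruct Hv as [Hi [Hj Hij]].
    assert (Hlast : last t' (0,0)%nat = (pred (length (a :: p')), pred (length (b :: q')))).
    { rewrite <- Hla. symmetry. apply last_cons_ne. discriminate. }
    assert (Hlin := last_in t' (0,0)%nat ltac:(discriminate)). rewrite Hlast in Hlin.
    destruct (Hmono _ Hlin) as [Hm1 Hm2]. simpl in Hm1, Hm2.
    set (t2 := map (shd i j) t').
    assert (Htr : traversal (skipn i (a :: p')) (skipn j (b :: q')) t2).
    { split; [|split; [|split]].
      - unfold t2, t'; simpl. unfold shd; simpl. f_equal. f_equal; lia.
      - unfold t2. rewrite (last_map_ne _ _ _ (0,0)%nat) by discriminate.
        rewrite Hlast. unfold shd. rewrite !length_skipn. cbn [fst snd]. destruct Hi as [-> | ->]; destruct Hj as [-> | ->]; simpl; f_equal; lia.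
      - unfold t2, t'; simpl; discriminate.
      - apply steps_ok_shd. apply (steps_ok_tail (0,0)%nat); auto.
        intros w Hw; destruct (Hmono w Hw); simpl in *; lia. }
    assert (Hc : trav_cost d (skipn i (a :: p')) (skipn j (b :: q')) t2 = trav_cost d (a :: p') (b :: q') t').
    { apply cost_ext. unfold t2. rewrite map_map. apply map_ext_in. intros w Hw.
      rewrite pair_dist_skip. destruct (Hmono w Hw). destruct w; unfold sup, shd; simpl in *.
      f_equal. f_equal; lia. }
    assert (Hne1 : skipn i (a :: p') <> []).
    { intro E. apply (f_equal (@length M)) in E. rewrite length_skipn in E. cbn [length] in E. lia. }
    assert (Hne2 : skipn j (b :: q') <> []).
    { intro E. apply (f_equal (@length M)) in E. rewrite length_skipn in E. cbn [length] in E. lia. }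
    assert (HF : FR d (trav_cost d (a :: p') (b :: q') t') (skipn i (a :: p')) (skipn j (b :: q'))).
    { rewrite <- Hc. apply IH; auto. unfold t2; rewrite length_map. unfold t' in *; cbn [length] in *; lia. }
    assert (HF' := FR_mono _ _ _ _ _ HF (Rmax_r (pair_dist d (a :: p') (b :: q') (0, 0)%nat) _)).
    simpl pair_dist in Hab |- *.
    destruct Hi as [->| ->]; destruct Hj as [->| ->]; simpl in Hij; try lia; simpl in HF'.
    + apply FR_r; auto.
    + apply FR_l; auto.
    + apply FR_lr; auto.
Qed.

Lemma trav_step {M} (d : M -> M -> R) (P Q : list M) di dj t e :
  valid_step (0,0)%nat (di, dj) -> P <> [] -> Q <> [] ->
  skipn di P <> [] -> skipn dj Q <> [] ->
  traversal (skipn di P) (skipn dj Q) t -> trav_cost d (skipn di P) (skipn dj Q) t <= e ->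
  pair_dist d P Q (0,0)%nat <= e ->
  exists T, traversal P Q T /\ trav_cost d P Q T <= e.
Proof.
  intros Hv HP HQ H1 H2 [Hh [Hla [Hne Hs]]] Hc H0.
  destruct t as [|z t]; [congruence|]. simpl in Hh. injection Hh as ->.
  exists ((0,0)%nat :: map (sup di dj) ((0,0)%nat :: t)). split; [split; [|split; [|split]]|].
  - reflexivity.
  - rewrite last_cons_ne by discriminate. rewrite (last_map_ne _ _ _ (0,0)%nat) by discriminate.
    rewrite Hla. unfold sup. rewrite !length_skipn. cbn [fst snd].
    assert (length (skipn di P) <> 0%nat) by (intro E; apply length_zero_iff_nil in E; auto).
    assert (length (skipn dj Q) <> 0%nat) by (intro E; apply length_zero_iff_nil in E; auto).
    rewrite length_skipn in *. f_equal; lia.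
  - discriminate.
  - split.
    + simpl. unfold sup; simpl. rewrite !Nat.add_0_r. exact Hv.
    + apply steps_ok_sup. exact Hs.
  - rewrite cost_cons. apply Rmax_lub; auto. rewrite <- Hc. right. apply cost_ext.
    rewrite map_map. apply map_ext. intros w. rewrite pair_dist_skip. reflexivity.
Qed.

Lemma FR_to_trav {M} (d : M -> M -> R) e p q :
  (forall x y, 0 <= d x y) ->
  FR d e p q -> exists t, traversal p q t /\ trav_cost d p q t <= e.
Proof.
  intros Hpos H; induction H as [a b Hab|a b p q Hab H IH|a b p q Hab H IH|a b p q Hab H IH].
  - exists [(0,0)%nat]. split. split; [reflexivity|split; [reflexivity|split; [discriminate|exact I]]].
    rewrite cost_cons. apply Rmax_lub; auto. unfold trav_cost; simpl. specialize (Hpos a b); lra.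
  - destruct IH as [t [Ht Hc]]. destruct (FR_nonempty _ _ _ _ H).
    assert (valid_step (0,0)%nat (1,0)%nat) by (unfold valid_step; lia).
    apply (trav_step d (a :: p) (b :: q) 1 0 t); simpl; auto; try discriminate.
  - destruct IH as [t [Ht Hc]]. destruct (FR_nonempty _ _ _ _ H).
    assert (valid_step (0,0)%nat (0,1)%nat) by (unfold valid_step; lia).
    apply (trav_step d (a :: p) (b :: q) 0 1 t); simpl; auto; try discriminate.
  - destruct IH as [t [Ht Hc]]. destruct (FR_nonempty _ _ _ _ H).
    assert (valid_step (0,0)%nat (1,1)%nat) by (unfold valid_step; lia).
    apply (trav_step d (a :: p) (b :: q) 1 1 t); simpl; auto; try discriminate.
Qed.

Definition vals {M} (d : M -> M -> R) (p q : list M) : list R := flat_map (fun a => map (d a) q) p.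

Lemma vals_in {M} (d : M -> M -> R) p q a b : In a p -> In b q -> In (d a b) (vals d p q).
Proof. intros Ha Hb. unfold vals. apply in_flat_map. exists a; split; auto. apply in_map; auto. Qed.

Lemma vals_inv {M} (d : M -> M -> R) p q v : In v (vals d p q) -> exists a b, In a p /\ In b q /\ v = d a b.
Proof. unfold vals; intros H. apply in_flat_map in H as [a [Ha H]]. apply in_map_iff in H as [b [<- Hb]].
  exists a, b; auto. Qed.

Lemma vals_mono {M} (d : M -> M -> R) p q p' q' v : incl p p' -> incl q q' ->
  In v (vals d p q) -> In v (vals d p' q').
Proof. intros H1 H2 H. destruct (vals_inv _ _ _ _ H) as [a [b [Ha [Hb ->]]]]. apply vals_in; auto. Qed.

Lemma Rmax_choice x y : Rmax x y = x \/ Rmax x y = y.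
Proof. unfold Rmax; destruct (Rle_dec x y); auto. Qed.

Lemma FR_tight {M} (d : M -> M -> R) e p q :
  FR d e p q -> exists v, In v (vals d p q) /\ v <= e /\ FR d v p q.
Proof.
  intros H; induction H as [a b Hab|a b p q Hab H IH|a b p q Hab H IH|a b p q Hab H IH].
  - exists (d a b). split; [apply vals_in; simpl; auto|split; auto]. apply FR_one; lra.
  - destruct IH as [v [Hv [Hle HF]]]. exists (Rmax (d a b) v). split; [|split].
    + destruct (Rmax_choice (d a b) v) as [-> | ->]. apply vals_in; simpl; auto.
      eapply vals_mono; [| |exact Hv]; intros x Hx; simpl; auto.
    + apply Rmax_lub; auto.
    + apply FR_l. apply Rmax_l. eapply FR_mono; [exact HF|apply Rmax_r].
  - destruct IH as [v [Hv [Hle HF]]]. exists (Rmax (d a b) v). split; [|split].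
    + destruct (Rmax_choice (d a b) v) as [-> | ->]. apply vals_in; simpl; auto.
      eapply vals_mono; [| |exact Hv]; intros x Hx; simpl; auto.
    + apply Rmax_lub; auto.
    + apply FR_r. apply Rmax_l. eapply FR_mono; [exact HF|apply Rmax_r].
  - destruct IH as [v [Hv [Hle HF]]]. exists (Rmax (d a b) v). split; [|split].
    + destruct (Rmax_choice (d a b) v) as [-> | ->]. apply vals_in; simpl; auto.
      eapply vals_mono; [| |exact Hv]; intros x Hx; simpl; auto.
    + apply Rmax_lub; auto.
    + apply FR_lr. apply Rmax_l. eapply FR_mono; [exact HF|apply Rmax_r].
Qed.

Lemma list_min (P : R -> Prop) : forall L, (exists v, In v L /\ P v) ->
  exists v, In v L /\ P v /\ forall w, In w L -> P w -> v <= w.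
Proof.
  induction L as [|x L IH]; intros [v [Hv HP]]; [destruct Hv|].
  destruct (classic (exists v, In v L /\ P v)) as [Hex|Hnex].
  - destruct (IH Hex) as [u [Hu [HPu Hmin]]].
    destruct (Rle_dec u x) as [Hux|Hux].
    + exists u; split; [right; auto|split; auto]. intros w [<-|Hw] HPw; auto.
    + destruct (classic (P x)) as [HPx|HPx].
      * exists x; split; [left; auto|split; auto]. intros w [<-|Hw] HPw; [lra|].
        specialize (Hmin w Hw HPw); lra.
      * exists u; split; [right; auto|split; auto]. intros w [<-|Hw] HPw; auto. contradiction.
  - destruct Hv as [<-|Hv]; [|exfalso; apply Hnex; eauto].
    exists x; split; [left; auto|split; auto]. intros w [<-|Hw] HPw; [lra|].
    exfalso; apply Hnex; eauto.
Qed.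

Lemma FR_exists {M} (d : M -> M -> R) : forall p q, p <> [] -> q <> [] -> exists e, FR d e p q.
Proof.
  induction p as [|a p IHp]; intros q Hp Hq; [congruence|].
  destruct p as [|a' p'].
  - clear IHp Hp. induction q as [|b q IHq]; [congruence|].
    destruct q as [|b' q'].
    + exists (d a b); apply FR_one; lra.
    + destruct IHq as [e He]; [discriminate|]. exists (Rmax e (d a b)).
      apply FR_r; [apply Rmax_r|]. eapply FR_mono; [exact He|apply Rmax_l].
  - destruct q as [|b q]; [congruence|]. destruct (IHp (b :: q)) as [e He]; try discriminate.
    exists (Rmax e (d a b)). apply FR_l; [apply Rmax_r|]. eapply FR_mono; [exact He|apply Rmax_l].
Qed.

Lemma is_dF_exists {M} (d : M -> M -> R) p q : (forall x y, 0 <= d x y) ->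
  p <> [] -> q <> [] -> exists r, is_dF d p q r.
Proof.
  intros Hpos Hp Hq.
  destruct (FR_exists d p q Hp Hq) as [e He].
  destruct (FR_tight _ _ _ _ He) as [v0 [Hv0 [_ HF0]]].
  destruct (list_min (fun v => FR d v p q) (vals d p q)) as [v [Hv [HFv Hmin]]]; [eauto|].
  assert (Hlow : forall t, traversal p q t -> v <= trav_cost d p q t).
  { intros t Ht. pose proof (trav_to_FR d (length t) t p q (le_n _) Hp Hq Ht) as HF.
    destruct (FR_tight _ _ _ _ HF) as [u [Hu [Hle HFu]]]. specialize (Hmin u Hu HFu). lra. }
  exists v. split; auto.
  destruct (FR_to_trav d v p q Hpos HFv) as [t [Ht Hc]]. exists t; split; auto.
  specialize (Hlow t Ht). lra.
Qed.

Lemma dF_spec {M} (d : M -> M -> R) p q : (forall x y, 0 <= d x y) ->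
  p <> [] -> q <> [] -> is_dF d p q (dF d p q).
Proof. intros. unfold dF. apply epsilon_spec. apply is_dF_exists; auto. Qed.

Lemma dF_FR {M} (d : M -> M -> R) p q : (forall x y, 0 <= d x y) ->
  p <> [] -> q <> [] -> FR d (dF d p q) p q.
Proof.
  intros Hpos Hp Hq. destruct (dF_spec d p q Hpos Hp Hq) as [[t [Ht Hc]] _].
  rewrite <- Hc. apply (trav_to_FR d (length t)); auto.
Qed.

Lemma FR_dF {M} (d : M -> M -> R) e p q : (forall x y, 0 <= d x y) ->
  FR d e p q -> dF d p q <= e.
Proof.
  intros Hpos H. destruct (FR_nonempty _ _ _ _ H) as [Hp Hq].
  destruct (FR_to_trav d e p q Hpos H) as [t [Ht Hc]].
  destruct (dF_spec d p q Hpos Hp Hq) as [_ Hl]. specialize (Hl t Ht). lra.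
Qed.

Lemma dF_nonneg {M} (d : M -> M -> R) p q : (forall x y, 0 <= d x y) ->
  p <> [] -> q <> [] -> 0 <= dF d p q.
Proof. intros. eapply FR_nonneg; eauto. apply dF_FR; auto. Qed.

Lemma dF_sym {M} (d : M -> M -> R) p q : (forall x y, 0 <= d x y) -> (forall x y, d x y = d y x) ->
  p <> [] -> q <> [] -> dF d p q = dF d q p.
Proof.
  intros Hpos Hs Hp Hq. apply Rle_antisym.
  - apply FR_dF; auto. apply FR_sym; auto. apply dF_FR; auto.
  - apply FR_dF; auto. apply FR_sym; auto. apply dF_FR; auto.
Qed.

Lemma dF_tri {M} (d : M -> M -> R) p q r : (forall x y, 0 <= d x y) ->
  (forall x y z, d x z <= d x y + d y z) ->
  p <> [] -> q <> [] -> r <> [] -> dF d p r <= dF d p q + dF d q r.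
Proof.
  intros Hpos Ht Hp Hq Hr. apply FR_dF; auto.
  apply (FR_tri d _ _ Ht (length p + length q + length r) p q r (le_n _)); apply dF_FR; auto.
Qed.

Lemma ln_le' x y : 0 < x -> x <= y -> ln x <= ln y.
Proof. intros Hx [H|H]; [left; apply ln_increasing; auto|subst; lra]. Qed.

Lemma exp_le' x y : x <= y -> exp x <= exp y.
Proof. intros [H|H]; [left; apply exp_increasing; auto|subst; lra]. Qed.

Lemma refine_cover {M} (d : M -> M -> R) lam : doubling_cover d lam ->
  forall r, 0 < r -> forall Ls : list M, exists L', (length L' <= lam * length Ls)%nat /\
  forall c, In c Ls -> forall y, d c y <= r -> exists c', In c' L' /\ d c' y <= r / 2.
Proof.
  intros Hdc r Hr Ls. induction Ls as [|c Ls IH].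
  - exists []. split; [simpl; lia|]. intros c [].
  - destruct IH as [L1 [Hl1 H1]]. destruct (Hdc c r Hr) as [L2 [Hl2 H2]].
    exists (L2 ++ L1). split. { rewrite length_app. simpl. lia. }
    intros c0 [<-|Hc] y Hy.
    + destruct (H2 y Hy) as [c' [Hc' Hd]]. exists c'; split; auto. apply in_or_app; auto.
    + destruct (H1 c0 Hc y Hy) as [c' [Hc' Hd]]. exists c'; split; auto. apply in_or_app; auto.
Qed.

Lemma net {M} (d : M -> M -> R) lam : (forall x, d x x = 0) -> doubling_cover d lam ->
  forall n x Rr, 0 < Rr -> exists L, (length L <= lam ^ n)%nat /\
  forall y, d x y <= Rr -> exists c, In c L /\ d c y <= Rr / 2 ^ n.
Proof.
  intros H0 Hdc n. induction n as [|n IH]; intros x Rr HR.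
  - exists [x]. split; [simpl; lia|]. intros y Hy. exists x; split; [left; auto|]. simpl. lra.
  - destruct (IH x Rr HR) as [L [Hl HL]].
    assert (Hp : 0 < Rr / 2 ^ n) by (apply Rdiv_lt_0_compat; auto; apply pow_lt; lra).
    destruct (refine_cover d lam Hdc _ Hp L) as [L' [Hl' HL']].
    exists L'. split. { simpl. apply (Nat.le_trans _ _ _ Hl'). apply Nat.mul_le_mono_l; auto. }
    intros y Hy. destruct (HL y Hy) as [c [Hc Hd]]. destruct (HL' c Hc y Hd) as [c' [Hc' Hd']].
    exists c'; split; auto. replace (Rr / 2 ^ S n) with (Rr / 2 ^ n / 2); auto.
    simpl. field. apply pow_nonzero. lra.
Qed.

Lemma cover_list {M} (d : M -> M -> R) lam n : (forall x, d x x = 0) -> doubling_cover d lam ->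
  forall S : list (M * R), (forall s, In s S -> 0 < snd s) ->
  exists P, (length P <= length S * lam ^ n)%nat /\
  forall s, In s S -> forall y, d (fst s) y <= snd s -> exists c, In c P /\ d c y <= snd s / 2 ^ n.
Proof.
  intros H0 Hdc S. induction S as [|s S IH]; intros Hpos.
  - exists []. split; [simpl; lia|]. intros s [].
  - destruct IH as [P1 [Hl1 H1]]. { intros; apply Hpos; right; auto. }
    destruct (net d lam H0 Hdc n (fst s) (snd s) (Hpos s (or_introl eq_refl))) as [P2 [Hl2 H2]].
    exists (P2 ++ P1). split. { rewrite length_app. simpl. lia. }
    intros s0 [<-|Hs] y Hy.
    + destruct (H2 y Hy) as [c [Hc Hd]]. exists c; split; auto. apply in_or_app; auto.
    + destruct (H1 s0 Hs y Hy) as [c [Hc Hd]]. exists c; split; auto. apply in_or_app; auto.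
Qed.

Fixpoint allk {A} (n : nat) (P : list A) : list (list A) :=
  match n with
  | O => [[]]
  | S n => flat_map (fun a => map (cons a) (allk n P)) P
  end.

Lemma allk_length {A} n (P : list A) : length (allk n P) = (length P ^ n)%nat.
Proof.
  induction n as [|n IH]; [reflexivity|]. simpl.
  rewrite (flat_map_constant_length (c := length (allk n P))). rewrite IH; reflexivity.
  intros; apply length_map.
Qed.

Lemma allk_in {A} n (P : list A) Y : length Y = n -> (forall y, In y Y -> In y P) -> In Y (allk n P).
Proof.
  revert Y; induction n as [|n IH]; intros Y HL HY.
  - destruct Y; [left; auto|discriminate].
  - destruct Y as [|y Y]; [discriminate|]. simpl. apply in_flat_map. exists y. split.
    apply HY; left; auto. apply in_map. apply IH. simpl in HL; lia. intros; apply HY; right; auto.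
Qed.

Lemma allk_inv {A} n (P : list A) Y : In Y (allk n P) -> length Y = n.
Proof.
  revert Y; induction n as [|n IH]; intros Y H.
  - destruct H as [<-|[]]; reflexivity.
  - simpl in H. apply in_flat_map in H as [a [Ha H]]. apply in_map_iff in H as [Z [<- HZ]].
    simpl. f_equal. apply IH; auto.
Qed.

Lemma pointwise {M} (d : M -> M -> R) (P : list M) e : forall q, q <> [] ->
  (forall y, In y q -> exists c, In c P /\ d y c <= e) ->
  exists Y, length Y = length q /\ (forall c, In c Y -> In c P) /\ FR d e q Y.
Proof.
  induction q as [|y q IH]; intros Hne H; [congruence|].
  destruct (H y (or_introl eq_refl)) as [c [Hc Hd]].
  destruct q as [|y' q'].
  - exists [c]. split; [reflexivity|split]. intros c0 [<-|[]]; auto. apply FR_one; auto.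
  - destruct IH as [Y [HL [HY HF]]]; [discriminate|intros; apply H; right; auto|].
    exists (c :: Y). split; [cbn [length]; rewrite HL; reflexivity|split]. intros c0 [<-|Hc0]; auto. apply FR_lr; auto.
Qed.

Lemma exists_pow2 : forall K x, 1 <= x <= 2 ^ K -> exists n, x <= 2 ^ n <= 2 * x.
Proof.
  induction K as [|K IH]; intros x [H1 H2].
  - exists O. simpl in *. lra.
  - destruct (Rle_dec x (2 ^ K)) as [H|H].
    + apply IH; lra.
    + exists (S K). simpl in *. lra.
Qed.

Lemma pow2_unbounded x : exists K, x <= 2 ^ K.
Proof.
  destruct (INR_unbounded x) as [K HK]. exists K.
  assert (forall n, INR n <= 2 ^ n).
  { induction n as [|n IH]; [simpl; lra|]. rewrite S_INR. simpl.
    assert (1 <= 2 ^ n) by (apply pow_R1_Rle; lra). lra. }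
  specialize (H K). lra.
Qed.

Lemma find_scale s t : forall N, 0 < s -> s < t <= s * 2 ^ N ->
  exists j, (j < N)%nat /\ s * 2 ^ j < t <= s * 2 ^ S j.
Proof.
  induction N as [|N IH]; intros Hs [H1 H2].
  - simpl in H2. lra.
  - destruct (Rle_dec t (s * 2 ^ N)) as [H|H].
    + destruct IH as [j [Hj Hb]]; auto. exists j; split; [lia|auto].
    + exists N. split; [lia|]. lra.
Qed.

Lemma div_le_of x y a : 0 < a -> x <= a * y -> x / a <= y.
Proof.
  intros Ha H. replace y with ((a * y) / a) by (field; lra).
  unfold Rdiv. apply Rmult_le_compat_r; auto. left; apply Rinv_0_lt_compat; auto.
Qed.

Lemma count_bound (lam n k : nat) (A : R) : (1 <= lam)%nat -> 2 <= A -> 2 ^ n <= 12 * A ->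
  INR (k * (2 * n) * lam ^ n) <=
  10 * Rpower 12 (log2 (INR lam)) * INR k * log2 A * Rpower A (log2 (INR lam)).
Proof.
  intros Hlam HA Hn.
  assert (Hl2 : 0 < ln 2) by (pose proof ln_lt_2; lra).
  assert (HL : 0 <= ln (INR lam)).
  { rewrite <- ln_1. apply ln_le'; [lra|]. apply (le_INR 1); auto. }
  assert (Hlampos : 0 < INR lam) by (apply lt_0_INR; lia).
  assert (h1 : INR n * ln 2 <= ln 12 + ln A).
  { rewrite <- ln_pow by lra. rewrite <- ln_mult by lra. apply ln_le'; auto. apply pow_lt; lra. }
  assert (h2 : ln 12 <= 4 * ln 2).
  { replace (4 * ln 2) with (ln (2 ^ 4)) by (rewrite ln_pow by lra; simpl; ring).
    apply ln_le'; simpl; lra. }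
  assert (h3 : ln 2 <= ln A) by (apply ln_le'; lra).
  assert (A1 : 2 * INR n <= 10 * log2 A).
  { unfold log2. apply Rmult_le_reg_r with (ln 2); auto.
    replace (10 * (ln A / ln 2) * ln 2) with (10 * ln A) by (field; lra). lra. }
  assert (A2 : INR lam ^ n <= Rpower 12 (log2 (INR lam)) * Rpower A (log2 (INR lam))).
  { rewrite <- Rpower_pow by auto. unfold Rpower. rewrite <- exp_plus. apply exp_le'.
    unfold log2.
    assert (INR n * ln 2 * ln (INR lam) <= (ln 12 + ln A) * ln (INR lam))
      by (apply Rmult_le_compat_r; auto).
    apply Rmult_le_reg_r with (ln 2); auto.
    replace ((ln (INR lam) / ln 2 * ln 12 + ln (INR lam) / ln 2 * ln A) * ln 2)
      with ((ln 12 + ln A) * ln (INR lam)) by (field; lra). lra. }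
  rewrite !mult_INR, pow_INR. rewrite (INR_IZR_INZ 2). simpl (IZR (Z.of_nat 2)).
  assert (0 <= INR k) by apply pos_INR.
  assert (0 <= INR n) by apply pos_INR.
  assert (0 <= INR lam ^ n) by (apply pow_le; lra).
  replace (10 * Rpower 12 (log2 (INR lam)) * INR k * log2 A * Rpower A (log2 (INR lam)))
    with (INR k * (10 * log2 A) * (Rpower 12 (log2 (INR lam)) * Rpower A (log2 (INR lam)))) by ring.
  apply Rmult_le_compat; auto.
  - apply Rmult_le_pos; auto. lra.
  - apply Rmult_le_compat_l; auto.
Qed.

Theorem mainTheorem6 :
  forall lam : nat,
  exists c : R, 0 < c /\
  forall (M : Type) (d : M -> M -> R),
    is_metric d -> doubling_constant d lam ->
  forall (alpha eps : R) (k m : nat) (X Xk : list M),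
    2 <= alpha -> 0 < eps < 1 -> (1 <= k)%nat -> (1 <= m)%nat ->
    length X = m ->
    approx_simplification d alpha k X Xk ->
    let D := dF d X Xk in
    exists C : list (list M),
      NoDup C /\ Forall (fun Y => length Y = k) C /\
      INR (length C) <=
        (c * INR k * log2 (alpha / eps) * Rpower (alpha / eps) (log2 (INR lam))) ^ k /\
      forall q : list M, length q = k ->
        let outer := dF d q Xk <= eps / (2 * alpha) * D \/
                     dF d q Xk >= 2 * (alpha + 1) / eps * D in
        (~ outer -> C <> []) /\
        forall Xstar : list M,
          ((outer /\ Xstar = Xk) \/
           (~ outer /\ In Xstar C /\ forall Y, In Y C -> dF d q Xstar <= dF d q Y)) ->
          let Delta := dF d q Xstar + dF d Xstar X in
          dF d q X <= Delta <= (1 + eps) * dF d q X.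
Proof.
  intros lam. exists (10 * Rpower 12 (log2 (INR lam))). split.
  { apply Rmult_lt_0_compat; [lra|]. unfold Rpower; apply exp_pos. }
  intros M d Hmet Hdbl alpha eps k m X Xk Ha He Hk Hm HX Happ D.
  destruct Hmet as [Hpos [Hzero [Hsym Htri]]].
  assert (H0 : forall x, d x x = 0) by (intro x; apply Hzero; reflexivity).
  destruct Hdbl as [Hdc _].
  destruct Happ as [HXk Happ].
  assert (HXne : X <> []) by (intro E; rewrite E in HX; simpl in HX; lia).
  assert (HXkne : Xk <> []) by (intro E; rewrite E in HXk; simpl in HXk; lia).
  assert (Hlam : (1 <= lam)%nat).
  { destruct X as [|x0 X0]; [congruence|].
    destruct (Hdc x0 1 ltac:(lra)) as [cs [Hcs Hc]].
    destruct (Hc x0 ltac:(rewrite H0; lra)) as [c0 [Hc0 _]].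
    destruct cs; [destruct Hc0|simpl in Hcs; lia]. }
  assert (HA : 2 <= alpha / eps).
  { apply Rle_trans with alpha; auto. apply (Rmult_le_reg_r eps); [lra|].
    unfold Rdiv; rewrite Rmult_assoc, Rinv_l by lra. nra. }
  assert (HD0 : 0 <= D) by (apply dF_nonneg; auto).
  assert (Facts : forall q, length q = k ->
    D <= alpha * dF d q X /\ dF d q Xk <= dF d q X + D /\ D <= dF d q Xk + dF d q X /\
    0 <= dF d q X /\ 0 <= dF d q Xk /\ dF d Xk X = D).
  { intros q Hq. assert (Hqne : q <> []) by (intro E; rewrite E in Hq; simpl in Hq; lia).
    split; [|split; [|split; [|split; [|split]]]].
    - unfold D. rewrite (dF_sym d q X) by auto. apply Happ; auto.
    - apply dF_tri; auto.
    - unfold D. rewrite (dF_sym d q X) by auto. rewrite Rplus_comm.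
      apply dF_tri; auto.
    - apply dF_nonneg; auto.
    - apply dF_nonneg; auto.
    - unfold D; apply dF_sym; auto. }
  assert (Hbase : 0 <= 10 * Rpower 12 (log2 (INR lam)) * INR k * log2 (alpha / eps) *
                       Rpower (alpha / eps) (log2 (INR lam))).
  { assert (0 <= log2 (alpha / eps)).
    { unfold log2. apply Rmult_le_pos. rewrite <- ln_1. apply ln_le'; lra.
      left; apply Rinv_0_lt_compat. pose proof ln_lt_2; lra. }
    assert (0 <= INR k) by apply pos_INR.
    unfold Rpower. pose proof (exp_pos (log2 (INR lam) * ln 12)).
    pose proof (exp_pos (log2 (INR lam) * ln (alpha / eps))).
    apply Rmult_le_pos; [|lra]. apply Rmult_le_pos; auto. apply Rmult_le_pos; auto. lra. }
  assert (Final : forall C : list (list M), Forall (fun Y => length Y = k) C ->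
    forall q, length q = k ->
    (~ (dF d q Xk <= eps / (2 * alpha) * D \/ dF d q Xk >= 2 * (alpha + 1) / eps * D) ->
       exists Y, In Y C /\ 2 * dF d q Y <= eps * dF d q X) ->
    (~ (dF d q Xk <= eps / (2 * alpha) * D \/ dF d q Xk >= 2 * (alpha + 1) / eps * D) -> C <> []) /\
        forall Xstar : list M,
          (((dF d q Xk <= eps / (2 * alpha) * D \/ dF d q Xk >= 2 * (alpha + 1) / eps * D) /\ Xstar = Xk) \/
           (~ (dF d q Xk <= eps / (2 * alpha) * D \/ dF d q Xk >= 2 * (alpha + 1) / eps * D)
             /\ In Xstar C /\ forall Y, In Y C -> dF d q Xstar <= dF d q Y)) ->
          dF d q X <= dF d q Xstar + dF d Xstar X <= (1 + eps) * dF d q X).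
  { intros C HC q Hq Hinner.
    assert (Hqne : q <> []) by (intro E; rewrite E in Hq; simpl in Hq; lia).
    destruct (Facts q Hq) as [F1 [F2 [F3 [F4 [F5 F6]]]]].
    split.
    { intros Hno E. destruct (Hinner Hno) as [Y [HY _]]. rewrite E in HY; destruct HY. }
    intros Xstar [[Hout ->] | [Hno [HXs Hmin]]].
    - rewrite F6. split; [rewrite <- F6; apply dF_tri; auto|].
      set (t := dF d q Xk) in *. set (x := dF d q X) in *.
      destruct Hout as [Hout|Hout].
      + assert (Hu : D / alpha <= x) by (apply div_le_of; lra).
        replace (eps / (2 * alpha) * D) with (eps * (D / alpha) / 2) in Hout by (field; lra).
        assert (eps * (D / alpha) <= eps * x) by (apply Rmult_le_compat_l; lra).
        lra.
      + set (w := 2 * (alpha + 1) / eps * D) in *.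
        assert (Hw : eps * w = 2 * (alpha + 1) * D) by (unfold w; field; lra).
        assert (0 <= eps * (t - w)) by (apply Rmult_le_pos; lra).
        assert (0 <= eps * (x - t + D)) by (apply Rmult_le_pos; lra).
        assert (0 <= D * (2 * alpha - eps)) by (apply Rmult_le_pos; lra).
        nra.
    - destruct (Hinner Hno) as [Y [HY HYb]].
      assert (HXsl : length Xstar = k) by (rewrite Forall_forall in HC; apply HC; auto).
      assert (HXsne : Xstar <> []) by (intro E; rewrite E in HXsl; simpl in HXsl; lia).
      specialize (Hmin Y HY).
      split; [apply dF_tri; auto|].
      assert (dF d Xstar X <= dF d Xstar q + dF d q X) by (apply dF_tri; auto).
      rewrite (dF_sym d Xstar q) in H by auto. lra. }
  destruct (Rle_lt_or_eq_dec 0 D HD0) as [HDpos|HDz].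
  2:{ exists []. split; [constructor|split; [constructor|split]].
      { simpl. apply pow_le. auto. }
      intros q Hq outer. cbv zeta.
      apply (Final [] (Forall_nil _) q Hq).
      intros Hno. exfalso. apply Hno. right. rewrite <- HDz. rewrite Rmult_0_r.
      destruct (Facts q Hq) as [_ [_ [_ [_ [F5 _]]]]]. lra. }
  set (A := alpha / eps) in *.
  destruct (pow2_unbounded (6 * A)) as [K HK].
  destruct (exists_pow2 K (6 * A) ltac:(lra)) as [n [Hn1 Hn2]].
  set (s := eps / (2 * alpha) * D).
  assert (Hs : 0 < s) by (unfold s; apply Rmult_lt_0_compat; auto; apply Rdiv_lt_0_compat; lra).
  set (Rs := map (fun j => s * 2 ^ S j) (seq 0 (2 * n))).
  set (Sc := list_prod Xk Rs).
  assert (HposS : forall z, In z Sc -> 0 < snd z).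
  { intros [x r] Hz. apply in_prod_iff in Hz as [_ Hr]. unfold Rs in Hr.
    apply in_map_iff in Hr as [j [<- _]]. cbn [snd]. apply Rmult_lt_0_compat; auto. apply pow_lt; lra. }
  destruct (cover_list d lam n H0 Hdc Sc HposS) as [P [HlP HP]].
  set (dec := list_eq_dec (fun a b : M => excluded_middle_informative (a = b))).
  set (C := nodup dec (allk k P)).
  assert (HCF : Forall (fun Y => length Y = k) C).
  { apply Forall_forall. intros Y HY. apply nodup_In in HY. apply allk_inv in HY; auto. }
  exists C. split; [apply NoDup_nodup|split; [exact HCF|split]].
  - assert (HlC : (length C <= length P ^ k)%nat).
    { rewrite <- allk_length. apply NoDup_incl_length; [apply NoDup_nodup|].
      intros Y HY. apply nodup_In in HY; auto. }
    assert (HlS : length Sc = (k * (2 * n))%nat).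
    { unfold Sc, Rs. rewrite length_prod, length_map, length_seq, HXk. reflexivity. }
    assert (HPb : INR (length P) <= 10 * Rpower 12 (log2 (INR lam)) * INR k * log2 A *
                       Rpower A (log2 (INR lam))).
    { apply Rle_trans with (INR (k * (2 * n) * lam ^ n)).
      - apply le_INR. rewrite <- HlS; auto.
      - apply count_bound; auto. unfold A in *; lra. }
    apply Rle_trans with (INR (length P ^ k)); [apply le_INR; auto|].
    rewrite pow_INR. apply pow_incr. split; [apply pos_INR|exact HPb].
  - intros q Hq outer. cbv zeta. apply (Final C HCF q Hq).
    intros Hno.
    assert (Hqne : q <> []) by (intro E; rewrite E in Hq; simpl in Hq; lia).
    destruct (Facts q Hq) as [F1 [F2 [F3 [F4 [F5 F6]]]]].
    set (t := dF d q Xk) in *. set (x := dF d q X) in *.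
    assert (Ht1 : s < t) by (unfold s; apply Rnot_le_lt; intro; apply Hno; left; auto).
    assert (Ht2 : t < 2 * (alpha + 1) / eps * D)
      by (apply Rnot_le_lt; intro; apply Hno; right; apply Rle_ge; auto).
    assert (Ht3 : t <= s * 2 ^ (2 * n)).
    { replace (2 * n)%nat with (n * 2)%nat by lia. rewrite pow_mult.
      assert (E1 : 2 * (alpha + 1) / eps * D = (2 * (alpha + 1)) * (D / eps)) by (field; lra).
      assert (Hv : 0 < D / eps) by (apply Rdiv_lt_0_compat; lra).
      assert (E2 : s * (36 * A ^ 2) = 18 * alpha * (D / eps)) by (unfold s, A; field; lra).
      assert (HnA : 36 * A ^ 2 <= (2 ^ n) ^ 2).
      { assert (0 <= 6 * A) by lra. replace (36 * A ^ 2) with ((6 * A) ^ 2) by ring.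
        apply pow_incr; lra. }
      apply Rle_trans with (s * (36 * A ^ 2)).
      - rewrite E2. nra.
      - apply Rmult_le_compat_l; lra. }
    destruct (find_scale s t (2 * n) Hs (conj Ht1 Ht3)) as [j [Hj [Hj1 Hj2]]].
    set (Rj := s * 2 ^ S j) in *.
    set (delta := Rj / 2 ^ n).
    assert (HFt : FR d t q Xk) by (apply dF_FR; auto).
    assert (Hcov : forall y, In y q -> exists c, In c P /\ d y c <= delta).
    { intros y Hy. destruct (FR_elem _ _ _ _ HFt y Hy) as [xx [Hxx Hdx]].
      assert (HinS : In (xx, Rj) Sc).
      { apply in_prod; auto. unfold Rs. apply (in_map (fun j0 => s * 2 ^ S j0)).
        apply in_seq. lia. }
      destruct (HP (xx, Rj) HinS y) as [c [Hc Hdc']]. simpl. rewrite Hsym. lra.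
      exists c. split; auto. rewrite Hsym. exact Hdc'. }
    destruct (pointwise d P delta q Hqne Hcov) as [Y [HYl [HYP HFY]]].
    exists Y. split.
    { unfold C. apply nodup_In. apply allk_in; auto. lia. }
    assert (HYd : dF d q Y <= delta) by (apply FR_dF; auto).
    set (N2 := 2 ^ n) in *.
    assert (HN2 : 0 < N2) by (unfold N2; apply pow_lt; lra).
    assert (Hd1 : delta * N2 = 2 * (s * 2 ^ j)) by (unfold delta, Rj; simpl; field; lra).
    assert (HepsN : 6 * alpha <= eps * N2).
    { replace (6 * alpha) with (eps * (6 * A)) by (unfold A; field; lra).
      apply Rmult_le_compat_l; lra. }
    assert (Hx6 : 6 * alpha * x <= eps * N2 * x) by (apply Rmult_le_compat_r; auto).
    assert (Htx : t <= (alpha + 1) * x) by nra.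
    apply Rmult_le_reg_r with N2; auto.
    assert (2 * dF d q Y * N2 <= 2 * delta * N2) by (apply Rmult_le_compat_r; lra).
    nra.
Qed.
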